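(* Let $(X,\beta,m)$ be a non-atomic standard probability space and $\tau$ an ergodic invertible measure-preserving map of $X$. Let $(\epsilon_n)_{n\ge1}$ be a sequence with $0<\epsilon_n<1/2$ for all $n$ and $\epsilon_n$ decreasing to $0$. Then there exists $E\in\beta$ with $m(E)>0$ such that $$m\Big(\bigcup_{k=1}^n\tau^k(E)\Big)\le1-\epsilon_n\quad\text{for all }n\ge1.$$ *)

(* Defs.v *)
From HB Require Import structures.
From mathcomp Require Import all_boot all_order all_algebra.
From mathcomp Require Import all_classical all_reals all_analysis.
Set Implicit Arguments. Unset Strict Implicit. Unset Printing Implicit Defensive.
Import Order.TTheory GRing.Theory Num.Theory.
Local Open Scope classical_set_scope.
Local Open Scope ring_scope.

Section Defs.
Context {R : realType} {d : measure_display} {X : measurableType d}.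

Definition is_metric (dist : X -> X -> R) : Prop :=
  [/\ forall x y, 0 <= dist x y,
      forall x y, dist x y = 0 <-> x = y,
      forall x y, dist x y = dist y x &
      forall x y z, dist x z <= dist x y + dist y z].

Definition metric_open (dist : X -> X -> R) (U : set X) : Prop :=
  forall x, U x -> exists2 r : R, 0 < r & [set y | dist x y < r] `<=` U.

Definition metric_complete (dist : X -> X -> R) : Prop :=
  forall u : nat -> X,
    (forall e : R, 0 < e -> exists N, forall p q, (N <= p)%N -> (N <= q)%N ->
        dist (u p) (u q) < e) ->
    exists l, forall e : R, 0 < e -> exists N, forall p, (N <= p)%N -> dist (u p) l < e.

Definition metric_separable (dist : X -> X -> R) : Prop :=
  exists D : set X, countable D /\
    forall x (e : R), 0 < e -> exists2 y, D y & dist x y < e.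

Definition standard_borel : Prop :=
  exists dist : X -> X -> R,
    [/\ is_metric dist, metric_complete dist, metric_separable dist &
        forall A : set X, measurable A <-> <<s metric_open dist >> A].

Definition nonatomic (m : set X -> \bar R) : Prop :=
  forall A, measurable A -> (0 < m A)%E ->
    exists B, [/\ measurable B, B `<=` A, (0 < m B)%E & (m B < m A)%E].

Definition invertible_mp (m : set X -> \bar R) (tau : X -> X) : Prop :=
  exists sigma : X -> X,
    [/\ measurable_fun setT tau, measurable_fun setT sigma,
        cancel tau sigma, cancel sigma tau &
        forall A, measurable A -> m (tau @^-1` A) = m A].

Definition ergodic (m : set X -> \bar R) (tau : X -> X) : Prop :=
  forall A, measurable A -> tau @^-1` A = A -> m A = 0%E \/ m A = 1%E.

End Defs.

(* Main.v *)
Require Import Defs.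
From HB Require Import structures.
From mathcomp Require Import all_boot all_order all_algebra.
From mathcomp Require Import all_classical all_reals all_analysis.
From mathcomp Require Import lra.
Import Order.TTheory GRing.Theory Num.Theory.
Local Open Scope classical_set_scope.
Local Open Scope ring_scope.


Section Tower.
Context (R : realType) (d : measure_display) (X : measurableType d)
  (m : probability X R) (tau sig : X -> X).
Hypotheses (mtau : measurable_fun setT tau) (msig : measurable_fun setT sig)
  (ts : cancel tau sig) (st : cancel sig tau)
  (mp : forall A, measurable A -> m (tau @^-1` A) = m A).

Definition it n := iter n tau.
Definition sit n := iter n sig.
Definition mr (A : set X) : R := fine (m A).

Lemma mE {A} : measurable A -> m A = (mr A)%:E.
Proof. by move=> mA; rewrite /mr fineK//; apply: fin_num_measure. Qed.

Lemma mr_ge0 A : 0 <= mr A.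
Proof. by rewrite /mr fine_ge0// measure_ge0. Qed.

Lemma mr_le1 {A} : measurable A -> mr A <= 1.
Proof. by move=> mA; rewrite -lee_fin -(mE mA) probability_le1. Qed.

Lemma mrT : mr setT = 1.
Proof. by rewrite /mr probability_setT. Qed.

Lemma mr_le {A B} : measurable A -> measurable B -> A `<=` B -> mr A <= mr B.
Proof. by move=> mA mB AB; rewrite -lee_fin -(mE mA) -(mE mB) le_measure// inE. Qed.

Lemma mrU {A B} : measurable A -> measurable B -> A `&` B = set0 ->
  mr (A `|` B) = mr A + mr B.
Proof.
move=> mA mB AB; apply: EFin_inj; rewrite -(mE (measurableU _ _ mA mB)).
rewrite measureU// EFinD; congr (_ + _); exact: mE.
Qed.

Lemma mrU2 {A B} : measurable A -> measurable B -> mr (A `|` B) <= mr A + mr B.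
Proof.
move=> mA mB; rewrite -lee_fin -(mE (measurableU _ _ mA mB)).
by rewrite EFinD -(mE mA) -(mE mB) measureU2.
Qed.

Lemma mrC {A} : measurable A -> mr (~` A) = 1 - mr A.
Proof.
move=> mA; rewrite -mrT -(setUv A) mrU//; first by rewrite [mr A + _]addrC addrK.
  exact: measurableC.
by rewrite setICr.
Qed.

Lemma mpre (f : X -> X) A : measurable_fun setT f -> measurable A -> measurable (f @^-1` A).
Proof. by move=> mf mA; rewrite -[_ @^-1` _]setTI; apply: mf. Qed.

Lemma m_sit n : measurable_fun setT (sit n).
Proof.
elim: n => [|n IH]; first exact: measurable_id.
rewrite /sit /=. exact: (measurableT_comp msig IH).
Qed.

Lemma m_it n : measurable_fun setT (it n).
Proof.
elim: n => [|n IH]; first exact: measurable_id.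
rewrite /it /=. exact: (measurableT_comp mtau IH).
Qed.

Lemma sitK n : cancel (it n) (sit n).
Proof.
elim: n => [//|n IH] x; rewrite /sit /it iterSr iterS ts; exact: IH.
Qed.

Lemma itK n : cancel (sit n) (it n).
Proof.
elim: n => [//|n IH] x; rewrite /sit /it iterSr iterS st; exact: IH.
Qed.

Lemma mp_sig A : measurable A -> m (sig @^-1` A) = m A.
Proof.
move=> mA; rewrite -mp; last exact: mpre.
by congr (m _); apply/seteqP; split => x /=; rewrite ts.
Qed.

Lemma mp_sit n A : measurable A -> m (sit n @^-1` A) = m A.
Proof.
elim: n A => [//|n IH] A mA.
have -> : sit n.+1 @^-1` A = sit n @^-1` (sig @^-1` A).
  by apply/seteqP; split => x.
by rewrite IH ?mp_sig//; exact: mpre.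
Qed.

Lemma mp_it n A : measurable A -> m (it n @^-1` A) = m A.
Proof.
elim: n A => [//|n IH] A mA.
have -> : it n.+1 @^-1` A = it n @^-1` (tau @^-1` A).
  by apply/seteqP; split => x.
by rewrite IH ?mp//; exact: mpre.
Qed.

Lemma image_pre n A : iter n tau @` A = sit n @^-1` A.
Proof.
apply/seteqP; split => x /=.
  by case=> y Ay <-; have := sitK n y; rewrite /it /= => ->.
by move=> Ax; exists (sit n x) => //; exact: itK.
Qed.

Lemma sig_sit j x : sig (sit j x) = sit j (sig x).
Proof. by rewrite /sit -iterSr. Qed.
Lemma tau_it j x : tau (it j x) = it j (tau x).
Proof. by rewrite /it -iterSr. Qed.

Lemma sitD a b x : sit (a + b) x = sit a (sit b x).
Proof. exact: iterD. Qed.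
Lemma itD a b x : it (a + b) x = it a (it b x).
Proof. exact: iterD. Qed.

Lemma sit_it j k x : (j <= k)%N -> sit j (it k x) = it (k - j) x.
Proof. by move=> jk; rewrite -{1}(subnKC jk) itD sitK. Qed.

Lemma sit_it2 j k x : (k <= j)%N -> sit j (it k x) = sit (j - k) x.
Proof. by move=> kj; rewrite -{1}(subnKC kj) addnC sitD sitK. Qed.

Lemma it_sit j k x : (j <= k)%N -> it j (sit k x) = sit (k - j) x.
Proof. by move=> jk; rewrite -{1}(subnKC jk) sitD itK. Qed.

Lemma it_sit2 j k x : (k <= j)%N -> it j (sit k x) = it (j - k) x.
Proof. by move=> kj; rewrite -{1}(subnKC kj) addnC itD itK. Qed.


Lemma bigcupS (F : nat -> set X) L :
  \bigcup_(j in `I_L.+1) F j = \bigcup_(j in `I_L) F j `|` F L.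
Proof.
apply/seteqP; split => x /=.
- case=> j /= jL Fj; move: jL; rewrite ltnS leq_eqVlt => /orP[/eqP ej|jl].
    by right; rewrite -ej.
  by left; exists j.
- case=> [[j /= jl Fj]|FL]; first by exists j => //=; exact: ltnW.
  by exists L => //=.
Qed.

Lemma bigcup0 (F : nat -> set X) : \bigcup_(j in `I_0) F j = set0.
Proof. by apply/seteqP; split => x //= [j]. Qed.

Lemma mbigcupI (F : nat -> set X) L : (forall i, measurable (F i)) ->
  measurable (\bigcup_(j in `I_L) F j).
Proof. by move=> mF; apply: bigcup_measurable => k _. Qed.

Lemma mr0 : mr set0 = 0.
Proof. by rewrite /mr measure0. Qed.

Lemma mr_bigcup_le (F : nat -> set X) L : (forall i, measurable (F i)) ->
  mr (\bigcup_(j in `I_L) F j) <= \sum_(i < L) mr (F i).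
Proof.
move=> mF; elim: L => [|L IH]; first by rewrite bigcup0 mr0 big_ord0.
rewrite bigcupS big_ord_recr /=.
by rewrite (le_trans (mrU2 (mbigcupI F L mF) (mF L)))// lerD2r.
Qed.

Lemma mr_bigcup_eq (F : nat -> set X) L : (forall i, measurable (F i)) ->
  (forall i j, (i < j < L)%N -> F i `&` F j = set0) ->
  mr (\bigcup_(j in `I_L) F j) = \sum_(i < L) mr (F i).
Proof.
move=> mF; elim: L => [|L IH] dF; first by rewrite bigcup0 mr0 big_ord0.
have dF' : forall i j, (i < j < L)%N -> F i `&` F j = set0.
  by move=> i j /andP[ij jL]; apply: dF; rewrite ij ltnW.
rewrite bigcupS big_ord_recr /= (mrU (mbigcupI F L mF) (mF L)) ?IH//.
- apply/seteqP; split => x //= [[j /= jL Fj] FL].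
  have := dF j L; rewrite jL ltnSn => /(_ erefl) /seteqP[+ _].
  by move=> /(_ x (conj Fj FL)).
Qed.

Lemma small_set (na : nonatomic m) w : 0 < w ->
  exists W, [/\ measurable W, 0 < mr W & mr W <= w].
Proof.
move=> w0.
have key k : exists A, [/\ measurable A, 0 < mr A & k.+1%:R * mr A <= 1].
  elim: k => [|k [A [mA A0 Ak]]].
    by exists setT; rewrite mrT mulr1 ltr01.
  have mA0 : (0 < m A)%E by rewrite (mE mA) lte_fin.
  have [B [mB BA B0' BltA']] := na A mA mA0.
  have B0 : 0 < mr B by rewrite -lte_fin -(mE mB); exact: B0'.
  have BltA : mr B < mr A by rewrite -lte_fin -(mE mB) -(mE mA); exact: BltA'.
  have hk : k.+2%:R = k%:R + 2 :> R by rewrite -addn2 natrD.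
  have k0 : 0 <= k%:R :> R by [].
  have hk1 : k.+1%:R = k%:R + 1 :> R by rewrite -addn1 natrD.
  rewrite hk1 in Ak.
  have [Bh|Bh] := lerP (mr B) (mr A / 2).
    exists B; split => //; rewrite hk; nra.
  have mAB : measurable (A `\` B) by exact: measurableD.
  have eAB : mr A = mr B + mr (A `\` B).
    rewrite -mrU//; first congr mr.
      apply/seteqP; split => x; last by case=> [/BA|[]].
      by move=> Ax; have [Bx|nBx] := pselect (B x); [left|right].
    by apply/seteqP; split => x //= [Bx [_ nBx]].
  exists (A `\` B); split => //; [nra | rewrite hk; nra].
have [k kw] : exists k, w^-1 < k.+1%:R by exists (Num.truncn w^-1); exact: truncnS_gt.
have [W [mW W0 Wk]] := key k.
exists W; split => //.
have hk1 : k.+1%:R = k%:R + 1 :> R by rewrite -addn1 natrD.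
have k0 : 0 <= k%:R :> R by [].
rewrite hk1 in kw Wk.
have ww : w * w^-1 = 1 by rewrite mulfV// gt_eqF.
nra.
Qed.

Lemma full (erg : ergodic m tau) W : measurable W -> 0 < mr W ->
  mr (\bigcup_j (sit j @^-1` W)) = 1.
Proof.
move=> mW W0.
set U := \bigcup_j (sit j @^-1` W).
have mU : measurable U by apply: bigcupT_measurable => j; exact: mpre (m_sit j) mW.
have UtU : U `<=` tau @^-1` U.
  by move=> x [j _ Wx]; exists j.+1 => //=; rewrite sig_sit ts.
have Un n : U `<=` it n @^-1` U.
  elim: n => [//|n IH] x /IH Ux; exact: UtU.
set V := \bigcup_n (it n @^-1` U).
have mV : measurable V by apply: bigcupT_measurable => n; exact: mpre (m_it n) mU.
have inv : tau @^-1` V = V.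
  apply/seteqP; split => x /=.
    by case=> n _ /= Ux; exists n.+1 => //=; rewrite tau_it.
  case=> n _ /= Ux; exists n => //=.
  by rewrite -tau_it; apply: UtU.
have WV : W `<=` V by move=> x Wx; exists 0%N => //; exists 0%N.
have UV : U `<=` V by move=> x Ux; exists 0%N.
have V1 : mr V = 1.
  have := mr_le mW mV WV => WVle.
  case: (erg V mV inv) => hV.
    by move: WVle; rewrite /mr hV /= => /(lt_le_trans W0); rewrite ltxx.
  by rewrite /mr hV.
set F := fun n => it n @^-1` U `\` U.
have mF n : measurable (F n) by apply: measurableD => //; exact: mpre (m_it n) mU.
have F0 n : m (F n) = 0%E.
  rewrite (mE (mF n)); congr EFin.
  have e1 : mr (it n @^-1` U) = mr U + mr (F n).
    rewrite -mrU//; last by apply/seteqP; split => x //= [? []].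
    congr mr; apply/seteqP; split => x; last by case=> [/Un|[]].
    by move=> Ux; have [Ux'|nUx] := pselect (U x); [left|right].
  have e2 : mr (it n @^-1` U) = mr U by rewrite /mr mp_it.
  by move: e1; rewrite e2; lra.
have mVU : measurable (V `\` U) by exact: measurableD.
have cov : V `\` U `<=` \bigcup_n F n.
  by move=> x [[n _ Ux] nUx]; exists n.
have := measure_sigma_subadditive m mF mVU cov.
rewrite eseries0; last by move=> i _ _; exact: F0.
move=> h; have VU0 : mr (V `\` U) <= 0 by rewrite -lee_fin -(mE mVU); exact: h.
have VU0' : mr (V `\` U) = 0 by apply/eqP; rewrite eq_le VU0 mr_ge0.
have : mr V = mr U + mr (V `\` U).
  rewrite -mrU//; last by apply/seteqP; split => x //= [? []].
  congr mr; apply/seteqP; split => x; last by case=> [/UV|[]].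
  by move=> Vx; have [Ux'|nUx] := pselect (U x); [left|right].
by rewrite VU0' addr0 V1 => <-.
Qed.

Definition Sset (W : set X) n :=
  sit n @^-1` W `&` \bigcap_(j in `I_n) ~` (sit j @^-1` W).

Lemma Sset_uniq {W a b x} : Sset W a x -> Sset W b x -> a = b.
Proof.
wlog ab : a b / (a <= b)%N.
  by move=> H Ha Hb; case: (leqP a b) => h; [exact: H|symmetry; apply: H => //; exact: ltnW].
move=> [Wa _] [_ Hb]; apply/eqP; rewrite eqn_leq ab /=; apply/negP => /negP.
by rewrite -ltnNge => /Hb; apply.
Qed.

Lemma mSset W n : measurable W -> measurable (Sset W n).
Proof.
move=> mW; apply: measurableI; first exact: mpre (m_sit n) mW.
by apply: bigcap_measurableType => j _; apply: measurableC; exact: mpre (m_sit j) mW.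
Qed.

Lemma tower (na : nonatomic m) (erg : ergodic m tau) N (th : R) : (0 < N)%N -> 0 < th ->
  exists B, [/\ measurable B,
     (forall i j, (i < j < N)%N -> sit i @^-1` B `&` sit j @^-1` B = set0) &
     1 - th <= N%:R * mr B].
Proof.
move=> N0 th0.
have N0' : 0 < N%:R :> R by rewrite ltr0n.
have [W [mW W0 Wth]] := small_set na _ (divr_gt0 th0 N0').
set Top := \bigcap_(i in `I_N) ~` (it i.+1 @^-1` W).
set B := \bigcup_q (Sset W (q * N)) `&` Top.
have mTop : measurable Top.
  by apply: bigcap_measurableType => j _; apply: measurableC; exact: mpre (m_it j.+1) mW.
have mB : measurable B.
  apply: measurableI => //; apply: bigcupT_measurable => q; exact: mSset.
have key y k : B y -> (0 < k < N)%N -> ~ B (it k y).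
  move=> [[q _ [Wq Hq]] Ty] /andP[k0 kN] [[q' _ Hq'] _].
  have Sk : Sset W (q * N + k) (it k y).
    split.
      by rewrite /= sit_it2 ?leq_addl// addnK.
    move=> j /= jlt; case: (ltnP j k) => jk.
      rewrite sit_it; last exact: ltnW.
      have kj : (k - j = (k - j).-1.+1)%N by rewrite prednK// subn_gt0.
      rewrite kj; apply: Ty => /=.
      by rewrite (leq_ltn_trans _ kN)// (leq_trans (leq_pred _))// leq_subr.
    rewrite sit_it2//; apply: Hq => /=.
    by rewrite ltn_subLR// addnC.
  have := Sset_uniq Hq' Sk => /(congr1 (modn^~ N)).
  by rewrite modnMl modnMDl modn_small// => k0'; move: k0; rewrite -k0'.
have disj i j : (i < j < N)%N -> sit i @^-1` B `&` sit j @^-1` B = set0.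
  move=> /andP[ij jN]; apply/seteqP; split => x //= [Bi Bj].
  have : (0 < j - i < N)%N by rewrite subn_gt0 ij (leq_ltn_trans _ jN)// leq_subr.
  move=> /(key _ _ Bj); apply.
  by rewrite it_sit ?leq_subr// subKn// ltnW.
exists B; split => //.
set T := \bigcup_(j in `I_N) (sit j @^-1` B).
set U := \bigcup_j (sit j @^-1` W).
set Bad := \bigcup_(i in `I_N) (it i.+1 @^-1` W).
have mU : measurable U by apply: bigcupT_measurable => j; exact: mpre (m_sit j) mW.
have mBad : measurable Bad by apply: mbigcupI => i; exact: mpre (m_it i.+1) mW.
have mT : measurable T by apply: mbigcupI => j; exact: mpre (m_sit j) mB.
have cov : ~` T `<=` ~` U `|` Bad.
  move=> x nT; have [Ux|nUx] := pselect (U x); last by left.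
  have [Bx|nBx] := pselect (Bad x); first by right.
  exfalso; apply: nT.
  have exP : exists n, `[< W (sit n x) >] by case: Ux => j _ Wj; exists j; exact/asboolP.
  have [n /asboolP Wn nmin] := find_ex_minn exP.
  have nmin' j : (j < n)%N -> ~ W (sit j x).
    move=> jn Wj; have := nmin j (asboolT Wj); by rewrite leqNgt jn.
  have rN : ((n %% N)%N < N)%N by exact: ltn_pmod.
  exists ((n %% N)%N) => //=; split.
    exists ((n %/ N)%N) => //; split => /=.
      by rewrite -sitD -divn_eq.
    move=> j /= jq; rewrite -sitD; apply: nmin'.
    by rewrite {2}(divn_eq n N) ltn_add2r.
  move=> i iN; change (~ W (it i.+1 (sit (n %% N)%N x))).
  case: (leqP i.+1 ((n %% N)%N)) => ir.
    rewrite it_sit; last exact: ir.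
    move=> Wi; apply: (nmin' _ _ Wi).
    apply: (leq_trans _ (leq_mod n N)).
    by rewrite ltn_subrL (leq_trans _ ir).
  rewrite it_sit2; last exact: ltnW.
  rewrite subSn; last by rewrite -ltnS.
  move=> Wi; apply: nBx; exists (i - (n %% N)%N)%N => //=.
  by rewrite (leq_ltn_trans (leq_subr _ _)).
have hU : mr (~` U) = 0 by rewrite mrC// full// subrr.
have hBad : mr Bad <= N%:R * mr W.
  apply: le_trans (mr_bigcup_le _ _ _) _; first by move=> i; exact: mpre (m_it i.+1) mW.
  rewrite (eq_bigr (fun=> mr W)); last by move=> i _; rewrite /mr mp_it.
  by rewrite sumr_const card_ord mulr_natl.
have hT : mr T = N%:R * mr B.
  rewrite mr_bigcup_eq//; last by move=> i; exact: mpre (m_sit i) mB.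
  rewrite (eq_bigr (fun=> mr B)); last by move=> i _; rewrite /mr mp_sit.
  by rewrite sumr_const card_ord mulr_natl.
have hcT : mr (~` T) <= th.
  apply: le_trans (mr_le (measurableC mT) (measurableU _ _ (measurableC mU) mBad) cov) _.
  apply: le_trans (mrU2 (measurableC mU) mBad) _.
  rewrite hU add0r (le_trans hBad)//.
  by rewrite -ler_pdivlMl// mulrC.
rewrite -hT; move: hcT; rewrite mrC//; lra.
Qed.

Lemma main_sec (na : nonatomic m) (erg : ergodic m tau) (eps : nat -> R) :
  (forall n, (1 <= n)%N -> 0 < eps n < 1 / 2) ->
  (forall n, (1 <= n)%N -> eps n.+1 <= eps n) ->
  eps @ \oo --> 0 ->
  exists E : set X, [/\ measurable E, (0 < m E)%E &
    forall n, (1 <= n)%N ->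
      (m (\bigcup_(k in [set k | (1 <= k <= n)%N]) (iter k tau @` E))
        <= (1 - eps n)%:E)%E].
Proof.
move=> epsb epsd epsc.
set a := eps 1%N.
have [a0 a2] : 0 < a /\ a < 1 / 2 by have /andP[] := epsb 1%N erefl.
have epsa n : (1 <= n)%N -> eps n <= a.
  elim: n => [//|n IH] n1; case: (posnP n) => [->//|n0].
  exact: le_trans (epsd _ n0) (IH n0).
have h2a : 0 < 1 - 2 * a by lra.
pose p := (Num.truncn (3 / (1 - 2 * a))).+3.
set P : R := p%:R.
have hP : 3 < P * (1 - 2 * a).
  have := truncnS_gt (3 / (1 - 2 * a)).
  rewrite -/P ltr_pdivrMr// => h; apply: lt_le_trans h _.
  apply: ler_wpM2r; first exact: ltW.
  by rewrite /P ler_nat /p ltnW// ltnW.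
have P3 : 3 < P by nra.
have P0 : 0 < P by lra.
pose c i : R := (2 ^ i.+1)%:R.
have c0 i : 0 < c i by rewrite /c ltr0n expn_gt0.
pose kap i : R := (P - 3) / (P * c i).
have kap0 i : 0 < kap i by rewrite /kap divr_gt0 ?mulr_gt0// subr_gt0.
have hK i : exists K, forall n, (K <= n)%N -> eps n < kap i.+1.
  have := (cvgr0Pnorm_lt eps).1 epsc (kap i.+1) (kap0 i.+1).
  case=> K _ HK; exists K => n /HK /= h.
  exact: le_lt_trans (ler_norm _) h.
have [Kf HKf] := choice hK.
pose M i := (Kf i).+1.
pose Nn i := (p * 2 ^ i.+1 * M i)%N.
pose L i := ((p - 1) * M i)%N.
have Nn0 i : (0 < Nn i)%N by rewrite /Nn !muln_gt0 expn_gt0.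
have hB i : exists B, [/\ measurable B,
     (forall k j, (k < j < Nn i)%N -> sit k @^-1` B `&` sit j @^-1` B = set0) &
     1 - P^-1 <= (Nn i)%:R * mr B].
  by apply: tower => //; rewrite invr_gt0.
have [Bf HBf] := choice hB.
have mBf i : measurable (Bf i) by case: (HBf i).
have levels i Ln s : (Ln + s <= Nn i)%N ->
    mr (\bigcup_(j in `I_Ln) sit (j + s) @^-1` Bf i) = Ln%:R * mr (Bf i).
  move=> LsN; case: (HBf i) => _ dj _.
  rewrite mr_bigcup_eq; last 2 first.
  - by move=> j; exact: mpre (m_sit _) (mBf i).
  - move=> k j /andP[kj jL]; apply: dj; rewrite ltn_add2r kj /=.
    by rewrite (leq_trans _ LsN)// ltn_add2r.
  rewrite (eq_bigr (fun=> mr (Bf i))); last by move=> j _; rewrite /mr mp_sit.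
  by rewrite sumr_const card_ord mulr_natl.
have hb1 i : (Nn i)%:R * mr (Bf i) <= 1.
  rewrite -(levels i (Nn i) 0%N) ?addn0//.
  by apply: mr_le1; apply: mbigcupI => j; exact: mpre (m_sit _) (mBf i).
have hb2 i : 1 - P^-1 <= (Nn i)%:R * mr (Bf i) by case: (HBf i).
have eNn i : (Nn i)%:R = P * c i * (M i)%:R by rewrite /Nn !natrM.
have eL i : (L i)%:R = (P - 1) * (M i)%:R.
  by rewrite /L natrM natrB// /p.
have LN i : (L i <= Nn i)%N.
  rewrite /L /Nn leq_mul2r; apply/orP; right.
  by rewrite (leq_trans (leq_subr _ _))// leq_pmulr// expn_gt0.
pose Di i := \bigcup_(j in `I_(L i)) sit (j + 0) @^-1` Bf i.
have mDi i : measurable (Di i) by apply: mbigcupI => j; exact: mpre (m_sit _) (mBf i).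
set D := \bigcup_i Di i.
have mD : measurable D by exact: bigcupT_measurable.
have hDi i : mr (Di i) <= (1 - P^-1) / (2 ^ i.+1)%:R.
  rewrite /Di levels ?addn0// eL.
  have := hb1 i; rewrite eNn -/(c i) => h1.
  have Mi0 : 0 < (M i)%:R :> R by rewrite ltr0n.
  have b0 := mr_ge0 (Bf i).
  rewrite -/(c i) ler_pdivlMr//.
  have hh : P^-1 * P = 1 by rewrite mulVf ?gt_eqF.
  have Pi0 : 0 < P^-1 by rewrite invr_gt0.
  nra.
have e0 : 0 <= 1 - P^-1.
  rewrite subr_ge0 invf_le1//; lra.
have hD : (m D <= (1 - P^-1)%:E)%E.
  apply: le_trans (measure_sigma_subadditive m mDi mD (@subset_refl _ D)) _.
  have := epsilon_trick (A := fun=> 0%E) xpredT (fun=> lexx 0%E) e0.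
  rewrite (@eseries0 _ (fun=> 0%E) 0%N xpredT)// add0e; apply: le_trans.
  apply: lee_nneseries => [i _ _|i _]; first exact: measure_ge0.
  rewrite add0e; have h := hDi i; rewrite -lee_fin -(mE (mDi i)) in h; exact: h.
set E := ~` D.
have mE' : measurable E by exact: measurableC.
have hDr : mr D <= 1 - P^-1 by rewrite -lee_fin -(mE mD).
have hEpos : 0 < mr E.
  rewrite mrC//; have : 0 < P^-1 by rewrite invr_gt0.
  lra.
exists E; split => //.
  by rewrite (mE mE') lte_fin.
move=> n n1.
have en0 : 0 < eps n by have /andP[] := epsb n n1.
have exi : exists i, (n < Kf i)%N.
  have [j hj] : exists j, (eps n)^-1 < j.+1%:R.
    by exists (Num.truncn (eps n)^-1); exact: truncnS_gt.
  exists j; rewrite ltnNge; apply/negP => /HKf hlt.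
  have hkap : kap j.+1 * (P * c j.+1) = P - 3.
    by rewrite /kap mulfVK// mulf_neq0 ?gt_eqF.
  have hc : j.+1%:R <= c j.+1.
    rewrite /c ler_nat; apply: ltnW; apply: ltnW; exact: ltn_expl.
  have ee : eps n * (eps n)^-1 = 1 by rewrite mulfV ?gt_eqF.
  have cj0 := c0 j.+1.
  have kc : kap j.+1 * c j.+1 < 1 by nra.
  have einv0 : 0 < (eps n)^-1 by rewrite invr_gt0.
  nra.
have [i ni imin] := find_ex_minn exi.
have epsk : eps n <= kap i.
  case: i ni imin => [|j] ni imin.
    apply: le_trans (epsa n n1) _.
    rewrite /kap /c expn1 ler_pdivlMr ?mulr_gt0//; lra.
  have : ~~ (n < Kf j)%N by apply/negP => /imin; rewrite ltnn.
  by rewrite -leqNgt => /HKf /ltW.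
have nM : (n < M i)%N by rewrite /M ltnS ltnW.
have eL' : L i = ((p - 2) * M i + M i)%N.
  by rewrite /L /p /= mulSn addnC.
have nL : (n <= L i)%N by rewrite eL' (leq_trans (ltnW nM))// leq_addl.
set Ln := (L i - n)%N.
have LnN : (Ln + n <= Nn i)%N by rewrite subnK// LN.
set G := \bigcup_(j in `I_Ln) sit (j + n) @^-1` Bf i.
have mG : measurable G by apply: mbigcupI => j; exact: mpre (m_sit _) (mBf i).
have hG : mr G = Ln%:R * mr (Bf i) by exact: levels.
have Lnat : ((p - 2) * M i <= Ln)%N.
  by rewrite /Ln eL' -addnBA ?leq_addr// ltnW.
have Lr : (P - 2) * (M i)%:R <= Ln%:R.
  by rewrite -(@natrB _ p 2)// -natrM ler_nat.
have hcap : kap i <= mr G.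
  rewrite hG /kap ler_pdivrMr ?mulr_gt0//.
  have := hb2 i; rewrite eNn => h2.
  have b0 := mr_ge0 (Bf i).
  have hh : P^-1 * P = 1 by rewrite mulVf ?gt_eqF.
  have Pi0 : 0 < P^-1 by rewrite invr_gt0.
  have Mi0 : 0 < (M i)%:R :> R by rewrite ltr0n.
  have ci0 := c0 i.
  set bb := mr (Bf i) in h2 b0 *.
  have h3 : (P - 2) * (P * c i * (M i)%:R * bb) <= Ln%:R * bb * (P * c i).
    have : (P - 2) * (M i)%:R * bb <= Ln%:R * bb by rewrite ler_wpM2r.
    move=> h4; have hpc : 0 < P * c i by rewrite mulr_gt0.
    nra.
  nra.
rewrite (eq_bigcupr (fun k _ => image_pre k E)).
set U := \bigcup_(k in _) sit k @^-1` E.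
have mU : measurable U by apply: bigcup_measurable => k _; exact: mpre (m_sit k) mE'.
have mGc : measurable (~` G) by exact: measurableC.
have UG : U `<=` ~` G.
  move=> x [k /= /andP[k1 kn] Ex] [j /= jL Bx].
  apply: Ex; exists i => //; exists (j + n - k)%N => /=.
    rewrite (leq_ltn_trans (leq_subr _ _))//.
    by move: jL; rewrite /Ln ltn_subRL addnC.
  by rewrite addn0 -sitD subnK// (leq_trans kn)// leq_addl.
have h1 : (m U <= m (~` G))%E by apply: le_measure => //; rewrite inE.
apply: (le_trans h1); rewrite (mE mGc) lee_fin mrC//; lra.
Qed.

End Tower.

Theorem mainTheorem7 (R : realType) (d : measure_display) (X : measurableType d)
  (m : probability X R) (tau : X -> X) (eps : nat -> R) :
  @standard_borel R d X ->
  nonatomic m ->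
  invertible_mp m tau ->
  ergodic m tau ->
  (forall n, (1 <= n)%N -> 0 < eps n < 1 / 2) ->
  (forall n, (1 <= n)%N -> eps n.+1 <= eps n) ->
  eps @ \oo --> 0 ->
  exists E : set X, [/\ measurable E, (0 < m E)%E &
    forall n, (1 <= n)%N ->
      (m (\bigcup_(k in [set k | (1 <= k <= n)%N]) (iter k tau @` E))
        <= (1 - eps n)%:E)%E].
Proof.
move=> _ na [sig [mtau msig ts st mp]] erg epsb epsd epsc.
exact: (@main_sec R d X m tau sig mtau msig ts st mp na erg eps epsb epsd epsc).
Qed.
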